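(* Let $\Bbbk$ be an algebraically closed field of characteristic $p>2$, and let $\Psi_\Bbbk:Y_2^>(\Bbbk)\to W^{(2)}(\Bbbk)$ be the $\Bbbk$-algebra homomorphism with $e_r\mapsto x_1^r$. For every $k\in\mathbb{N}$, $$\mathrm{im}(\Psi_\Bbbk)\cap W^{(2)}_k(\Bbbk)\subset J_k:=\{f\in\Bbbk[x_1,\dots,x_k]^{\Sigma_k}:\ f=0 \text{ whenever } x_1=x_2+1=\dots=x_p+p-1\}$$ (for $k<p$ the condition is vacuous and $J_k=\Bbbk[x_1,\dots,x_k]^{\Sigma_k}$).
   Context: $\mathbb{N}=\{0,1,\dots\}$; $\frac12$ denotes the inverse of $2$ in $\Bbbk$. $Y_2^>(\Bbbk)$ is the $\Bbbk$-algebra generated by $e_r$ ($r\in\mathbb{N}$) with relations $[e_{r+1},e_s]-[e_r,e_{s+1}]=e_re_s+e_se_r$. $W^{(2)}(\Bbbk)=\bigoplus_{k\in\mathbb{N}}W^{(2)}_k(\Bbbk)$ with $W^{(2)}_k(\Bbbk)=\Bbbk[x_1,\dots,x_k]^{\Sigma_k}$, and product: for $F\in W_k$, $G\in W_\ell$, $F\star G=\sum_{\sigma}\sigma\big(F(x_1,\dots,x_k)G(x_{k+1},\dots,x_{k+\ell})\prod_{r\le k<r'}\frac{x_r-x_{r'}+1}{x_r-x_{r'}}\big)$, summing over $\sigma\in\Sigma_{k+\ell}$ with $\sigma(1)<\dots<\sigma(k)$ and $\sigma(k+1)<\dots<\sigma(k+\ell)$, acting by $x_r\mapsto x_{\sigma(r)}$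 (the result is a symmetric polynomial). *)

(* Defs.v *)
From HB Require Import structures.
From mathcomp Require Import all_boot all_order all_algebra all_fingroup.
From mathcomp Require Import mpoly.
Set Implicit Arguments. Unset Strict Implicit. Unset Printing Implicit Defensive.
Import Order.TTheory GRing.Theory Num.Theory.
Local Open Scope ring_scope.

Section Shuffle.
Variable K : fieldType.

Definition perm_act (n : nat) (s : 'S_n) (P : {mpoly K[n]}) : {mpoly K[n]} :=
  P \mPo [tuple 'X_(s i) | i < n].

Definition lift_left (k l : nat) (F : {mpoly K[k]}) : {mpoly K[k + l]} :=
  F \mPo [tuple 'X_(lshift l i) | i < k].
Definition lift_right (k l : nat) (G : {mpoly K[l]}) : {mpoly K[k + l]} :=
  G \mPo [tuple 'X_(rshift k j) | j < l].

Definition is_shuffle (k l : nat) (s : 'S_(k + l)) : bool :=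
  [forall i : 'I_k, forall j : 'I_k,
     (i < j)%N ==> (s (lshift l i) < s (lshift l j))%N] &&
  [forall i : 'I_l, forall j : 'I_l,
     (i < j)%N ==> (s (rshift k i) < s (rshift k j))%N].

Definition shuffle_num (k l : nat) (F : {mpoly K[k]}) (G : {mpoly K[l]})
  : {mpoly K[k + l]} :=
  lift_left l F * lift_right k G *
  \prod_(i < k) \prod_(j < l) ('X_(lshift l i) - 'X_(rshift k j) + 1).

Definition shuffle_den (k l : nat) : {mpoly K[k + l]} :=
  \prod_(i < k) \prod_(j < l) ('X_(lshift l i) - 'X_(rshift k j)).

Definition shuffle_frac (k l : nat) (F : {mpoly K[k]}) (G : {mpoly K[l]})
  : {fraction {mpoly K[k + l]}} :=
  \sum_(s : 'S_(k + l) | is_shuffle s)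
     tofrac (perm_act s (shuffle_num F G)) / tofrac (perm_act s (shuffle_den k l)).

(* H is the shuffle product F * G in W^(2) (H the polynomial equal to it) *)
Definition is_star (k l : nat) (F : {mpoly K[k]}) (G : {mpoly K[l]})
  (H : {mpoly K[k + l]}) : Prop :=
  tofrac H = shuffle_frac F G.

(* ImPsi k f  <->  f lies in im(Psi) ∩ W_k, where im(Psi) is the subalgebra
   of W^(2) generated by the images x_1^r of the generators e_r of Y_2^>;
   ImPsi k is the degree-k homogeneous component of that graded subalgebra. *)
Local Unset Implicit Arguments.
Inductive ImPsi : forall k : nat, {mpoly K[k]} -> Prop :=
  | ImPsi_one : ImPsi 0 (1 : {mpoly K[0]})
  | ImPsi_gen (r : nat) : ImPsi 1 ('X_(@ord0 0) ^+ r)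
  | ImPsi_zero (k : nat) : ImPsi k 0
  | ImPsi_add (k : nat) (f g : {mpoly K[k]}) :
      ImPsi k f -> ImPsi k g -> ImPsi k (f + g)
  | ImPsi_scale (k : nat) (c : K) (f : {mpoly K[k]}) :
      ImPsi k f -> ImPsi k (c *: f)
  | ImPsi_mul (k l : nat) (F : {mpoly K[k]}) (G : {mpoly K[l]})
      (H : {mpoly K[k + l]}) :
      ImPsi k F -> ImPsi l G -> is_star F G H -> ImPsi (k + l) H.

Local Set Implicit Arguments.

Definition J (p k : nat) (f : {mpoly K[k]}) : Prop :=
  f \is symmetric /\
  ((p <= k)%N -> forall (a : 'I_k -> K) (x0 : K),
      (forall i : 'I_k, (i < p)%N -> a i = x0 - i%:R) -> f.@[a] = 0).
End Shuffle.

(* Main.v *)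
Require Import Defs.
From HB Require Import structures.
From mathcomp Require Import all_boot all_order all_algebra all_fingroup.
From mathcomp Require Import mpoly zify ring.
Set Implicit Arguments. Unset Strict Implicit. Unset Printing Implicit Defensive.
Import Order.TTheory GRing.Theory Num.Theory.
Local Open Scope ring_scope.



Lemma comp_mpolyA n k m (R : comRingType) (P : {mpoly R[n]})
  (t : n.-tuple {mpoly R[k]}) (u : k.-tuple {mpoly R[m]}) :
  (P \mPo t) \mPo u = P \mPo [tuple (tnth t i \mPo u) | i < n].
Proof.
rewrite [P \mPo t]comp_mpolyEX [RHS]comp_mpolyEX raddf_sum /=; apply: eq_bigr => mm _.
rewrite comp_mpolyZ !comp_mpolyX rmorph_prod; congr (_ *: _); apply: eq_bigr => i _.
by rewrite rmorphXn tnth_mktuple.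
Qed.

Lemma msym_permE n (R : comRingType) (s : 'S_n) (P : {mpoly R[n]}) :
  msym s P = P \mPo [tuple 'X_(s i) | i < n].
Proof.
rewrite -[LHS]comp_mpoly_id msym_mPo; congr (_ \mPo _).
by apply: eq_from_tnth => i; rewrite !tnth_mktuple.
Qed.

Lemma msymXU n (R : comRingType) (s : 'S_n) (i : 'I_n) :
  msym s ('X_i : {mpoly R[n]}) = 'X_(s i).
Proof. by rewrite msym_permE comp_mpolyXU -tnth_nth tnth_mktuple. Qed.

Lemma clear_den (T : idomainType) (I : finType) (P : pred I) (a : T) (n d : I -> T) :
  (forall i, P i -> d i != 0) ->
  (tofrac a = \sum_(i | P i) tofrac (n i) / tofrac (d i)) <->
  (a * \prod_(i | P i) d i = \sum_(i | P i) n i * \prod_(j | P j && (j != i)) d j).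
Proof.
move=> d0.
have D0 : tofrac (\prod_(i | P i) d i) != 0 :> {fraction T}.
  rewrite tofrac_eq0 prodf_seq_neq0; apply/allP => i _; apply/implyP; exact: d0.
have E : (\sum_(i | P i) tofrac (n i) / tofrac (d i)) * tofrac (\prod_(i | P i) d i)
   = tofrac (\sum_(i | P i) n i * \prod_(j | P j && (j != i)) d j).
  rewrite mulr_suml rmorph_sum; apply: eq_bigr => i Pi.
  by rewrite (bigD1 i Pi) /= !rmorphM mulrA divfK // tofrac_eq0 d0.
split => H.
- by apply/eqP; rewrite -tofrac_eq tofracM H E.
- apply/eqP; rewrite -(inj_eq (mulIf D0)) /= E -tofracM H //.
Qed.

Lemma frac_push (R S : idomainType) (f : {rmorphism R -> S}) (I : finType) (P : pred I)
  (h : R) (nn dd : I -> R) :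
  (forall i, P i -> f (dd i) != 0) ->
  tofrac h = \sum_(i | P i) tofrac (nn i) / tofrac (dd i) ->
  tofrac (f h) = \sum_(i | P i) tofrac (f (nn i)) / tofrac (f (dd i)).
Proof.
move=> fd0 E.
have d0 i : P i -> dd i != 0.
  by move=> Pi; apply: contraNneq (fd0 i Pi) => ->; rewrite rmorph0.
move/(clear_den _ _ d0): E => E.
apply/(clear_den _ _ fd0).
rewrite -rmorph_prod -rmorphM E rmorph_sum; apply: eq_bigr => i _.
by rewrite rmorphM rmorph_prod.
Qed.


Lemma inc_enum (N : nat) (A : {set 'I_N}) : sorted ltn (map val (enum A)).
Proof.
rewrite -[enum _](eq_filter (mem_enum _)).
rewrite -(eq_filter (mem_map val_inj _)) -filter_map.
by rewrite (sorted_filter ltn_trans) // unlock val_ord_enum iota_ltn_sorted.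
Qed.

Lemma nth_enum_lt (N : nat) (A : {set 'I_N}) x y i j :
  (i < j)%N -> (j < #|A|)%N -> (nth x (enum A) i < nth y (enum A) j)%N.
Proof.
move=> ij jA; have iA : (i < #|A|)%N by apply: ltn_trans jA.
rewrite cardE in iA jA.
rewrite -(nth_map x 0%N val iA) -(nth_map y 0%N val jA).
by apply: (sorted_ltn_nth ltn_trans 0%N (inc_enum A)); rewrite ?inE ?size_map.
Qed.

Lemma enum_incr m N (f : 'I_m -> 'I_N) (A : {set 'I_N}) :
  (forall i j : 'I_m, (i < j)%N -> (f i < f j)%N) -> A = (f @: [set: 'I_m]) ->
  forall (i : 'I_m) x, nth x (enum A) i = f i.
Proof.
move=> finc ->.
have finj : injective f.
  move=> i j fij; apply: val_inj; apply/eqP; rewrite eqn_leq; apply/andP; split;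
  rewrite leqNgt; apply/negP => /finc; by rewrite fij ltnn.
have sA := inc_enum (f @: [set: 'I_m]).
have sF : sorted ltn [seq val (f i) | i <- enum 'I_m].
  have h : sorted ltn [seq val i | i <- enum 'I_m] by rewrite val_enum_ord iota_ltn_sorted.
  rewrite sorted_map in h; rewrite sorted_map; apply: sub_sorted h => i j /=; exact: finc.
have E : map val (enum (f @: [set: 'I_m])) = [seq val (f i) | i <- enum 'I_m].
  apply: (irr_sorted_eq ltn_trans ltnn) => // y.
  apply/mapP/mapP => [[x]|[i _ ->]].
  - by rewrite mem_enum => /imsetP [i _ ->] ->; exists i; rewrite ?mem_enum.
  - by exists (f i); rewrite // mem_enum imset_f.
move=> i x; apply: val_inj.
have sz : (i < size (enum (f @: [set: 'I_m])))%N.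
  by rewrite -cardE card_imset // cardsT card_ord.
by rewrite -(nth_map x (val x) val sz) E (nth_map i) ?size_enum_ord // nth_ord_enum.
Qed.

Section Shuf.
Variables k l : nat.
Local Notation n := (k + l).

Definition img (s : 'S_n) : {set 'I_n} := ((fun i => s (lshift l i)) @: [set: 'I_k]).

Lemma img_mul (s t : 'S_n) : img (s * t)%g = t @: img s.
Proof. by rewrite /img -imset_comp; apply: eq_imset => i /=; rewrite permM. Qed.

Lemma card_img (s : 'S_n) : #|img s| = k.
Proof. by rewrite card_imset ?cardsT ?card_ord // => i j /perm_inj /lshift_inj. Qed.

Lemma img_ls (s : 'S_n) (i : 'I_k) : s (lshift l i) \in img s.
Proof. exact: imset_f. Qed.

Lemma img_rs (s : 'S_n) (j : 'I_l) : s (rshift k j) \notin img s.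
Proof. by apply/imsetP => -[i _ /perm_inj /eqP]; rewrite eq_rlshift. Qed.

Lemma ltk_img (s : 'S_n) (z : 'I_n) : (z < k)%N = (s z \in img s).
Proof.
case: splitP => [i|j] Ez.
- have -> : z = lshift l i by apply: val_inj.
  by rewrite img_ls.
- have -> : z = rshift k j by apply: val_inj.
  by rewrite (negbTE (img_rs s j)).
Qed.

Definition shuf_fun (S : {set 'I_n}) (x : 'I_n) : 'I_n :=
  match split x with inl i => nth x (enum S) i | inr j => nth x (enum (~: S)) j end.

Lemma size_enumC (S : {set 'I_n}) : #|S| = k -> size (enum (~: S)) = l.
Proof.
move=> cS; apply/eqP; rewrite -cardE -(eqn_add2l k).
by rewrite -{1}cS cardsC card_ord.
Qed.

Lemma shuf_mem (S : {set 'I_n}) (x : 'I_n) : #|S| = k -> (shuf_fun S x \in S) = (x < k)%N.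
Proof.
move=> cS; rewrite /shuf_fun; case: splitP => [i|j] Ex.
- by rewrite -mem_enum mem_nth // -cardE cS.
- have : nth x (enum (~:S)) j \in ~: S by rewrite -mem_enum mem_nth ?size_enumC.
  by rewrite inE => /negbTE ->.
Qed.

Lemma shuf_inj (S : {set 'I_n}) : #|S| = k -> injective (shuf_fun S).
Proof.
move=> cS x y Exy.
have ek : (x < k)%N = (y < k)%N by rewrite -!(shuf_mem _ cS) Exy.
have sS : size (enum S) = k by rewrite -cardE.
have sC := size_enumC cS.
move: Exy ek; rewrite /shuf_fun; case: splitP => [i|j] Ex; case: splitP => [i'|j'] Ey => E ek //.
- apply: val_inj; rewrite /= Ex Ey; apply/eqP.
  rewrite (set_nth_default y x) ?sS // in E.
  by rewrite -(@nth_uniq _ y (enum S)) ?sS ?enum_uniq // E.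
- apply: val_inj; rewrite /= Ex Ey; apply/eqP.
  rewrite (set_nth_default y x) ?sC // in E.
  by rewrite eqn_add2l -(@nth_uniq _ y (enum (~: S))) ?sC ?enum_uniq // E.
Qed.

Definition shuf (S : {set 'I_n}) : 'S_n :=
  match #|S| =P k with
  | ReflectT h => perm (shuf_inj h)
  | ReflectF _ => 1%g end.

Lemma shufE (S : {set 'I_n}) : #|S| = k -> forall x, shuf S x = shuf_fun S x.
Proof.
move=> cS x; rewrite /shuf; case: eqP => [h|//]; by rewrite permE.
Qed.

Lemma shuf_ls (S : {set 'I_n}) (i : 'I_k) : #|S| = k -> shuf S (lshift l i) = nth (lshift l i) (enum S) i.
Proof.
move=> cS; rewrite shufE // /shuf_fun; case: splitP => [i' /= Ei|j /= Ej].
- by have -> : i' = i by apply: val_inj.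
- by move: (ltn_ord i); rewrite Ej; lia.
Qed.

Lemma shuf_rs (S : {set 'I_n}) (j : 'I_l) : #|S| = k -> shuf S (rshift k j) = nth (rshift k j) (enum (~: S)) j.
Proof.
move=> cS; rewrite shufE // /shuf_fun; case: splitP => [i /= Ei|j' /= Ej].
- by move: (ltn_ord i); rewrite -Ei; lia.
- by have -> : j' = j by apply: val_inj; move/eqP: Ej; rewrite eqn_add2l => /eqP.
Qed.

Lemma is_shuffle_shuf (S : {set 'I_n}) : #|S| = k -> is_shuffle (shuf S).
Proof.
move=> cS; apply/andP; split; apply/forallP => i; apply/forallP => j; apply/implyP => ij.
- by rewrite !shuf_ls // nth_enum_lt // cS.
- by rewrite !shuf_rs // nth_enum_lt // cardE size_enumC.
Qed.

Lemma img_shuf (S : {set 'I_n}) : #|S| = k -> img (shuf S) = S.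
Proof.
move=> cS; apply/eqP; rewrite eqEcard card_img cS leqnn andbT.
by apply/subsetP => y /imsetP [i _ ->]; rewrite shuf_ls // -mem_enum mem_nth // -cardE cS.
Qed.

Lemma imgC (s : 'S_n) : ~: img s = ((fun j => s (rshift k j)) @: [set: 'I_l]).
Proof.
apply/setP => y; rewrite inE -(permKV s y); move: (s^-1 y)%g => z.
case: (splitP z) => [i|j] Ez.
- have -> : z = lshift l i by apply: val_inj.
  rewrite img_ls /=; symmetry; apply/negbTE/imsetP => -[j _ /perm_inj /eqP].
  by rewrite eq_lrshift.
- have -> : z = rshift k j by apply: val_inj.
  by rewrite img_rs imset_f.
Qed.

Lemma shuf_img (s : 'S_n) : is_shuffle s -> shuf (img s) = s.
Proof.
move=> /andP [/forallP h1 /forallP h2]; apply/permP => x.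
rewrite shufE ?card_img // /shuf_fun; case: splitP => [i|j] Ex.
- have -> : x = lshift l i by apply: val_inj.
  apply: (enum_incr (f := fun i => s (lshift l i))) => // a b ab.
  exact: (implyP (forallP (h1 a) b) ab).
- have -> : x = rshift k j by apply: val_inj.
  apply: (enum_incr (f := fun j => s (rshift k j))); last exact: imgC.
  move=> a b ab; exact: (implyP (forallP (h2 a) b) ab).
Qed.

Definition Phi (t s : 'S_n) : 'S_n := shuf (img (s * t)%g).

Lemma Phi_shuffle (t s : 'S_n) : is_shuffle (Phi t s).
Proof. exact/is_shuffle_shuf/card_img. Qed.

Lemma img_Phi (t s : 'S_n) : img (Phi t s) = img (s * t)%g.
Proof. exact/img_shuf/card_img. Qed.

Lemma Phi_inv (t s : 'S_n) : is_shuffle s -> Phi t^-1 (Phi t s) = s.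
Proof.
move=> sh; rewrite /Phi img_mul img_Phi img_mul -imset_comp.
rewrite (eq_imset _ (fun x => permK t x)) imset_id.
exact: shuf_img.
Qed.

Lemma Phi_bp (t s : 'S_n) (x : 'I_n) : (((s * t) * (Phi t s)^-1)%g x < k)%N = (x < k)%N.
Proof.
rewrite [in LHS]permM (ltk_img (Phi t s)) permKV img_Phi (ltk_img (s * t)%g x).
by [].
Qed.

End Shuf.


Section Block.
Variables (k l : nat) (r : 'S_(k + l)).
Hypothesis hr : forall x, (r x < k)%N = (x < k)%N.

Let h1 (i : 'I_k) : (r (lshift l i) < k)%N.
Proof. by rewrite hr /= ltn_ord. Qed.
Let h2 (j : 'I_l) : (r (rshift k j) - k < l)%N.
Proof.
have := hr (rshift k j); have := ltn_ord (r (rshift k j)); rewrite /=; lia.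
Qed.
Let r1 i := Ordinal (h1 i).
Let r2 j := Ordinal (h2 j).
Let E1 i : r (lshift l i) = lshift l (r1 i).
Proof. by apply: val_inj. Qed.
Let E2 j : r (rshift k j) = rshift k (r2 j).
Proof.
apply: val_inj => /=; have := hr (rshift k j); rewrite /=; lia.
Qed.
Let r1_inj : injective r1.
Proof. by move=> a b /(congr1 (lshift l)); rewrite -!E1 => /perm_inj /lshift_inj. Qed.
Let r2_inj : injective r2.
Proof. by move=> a b /(congr1 (@rshift k l)); rewrite -!E2 => /perm_inj /rshift_inj. Qed.

Lemma block_prod (R : comRingType) (Q : 'I_(k + l) -> 'I_(k + l) -> R) :
  \prod_(i < k) \prod_(j < l) Q (r (lshift l i)) (r (rshift k j)) =
  \prod_(i < k) \prod_(j < l) Q (lshift l i) (rshift k j).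
Proof.
rewrite [RHS](reindex_inj r1_inj); apply: eq_bigr => i _.
rewrite [RHS](reindex_inj r2_inj); apply: eq_bigr => j _.
by rewrite E1 E2.
Qed.

Lemma block_left (R : comRingType) (F : {mpoly R[k]}) : F \is symmetric ->
  F \mPo [tuple 'X_(r (lshift l i)) | i < k] = F \mPo [tuple 'X_(lshift l i) | i < k].
Proof.
move=> /issymP sF; rewrite -[F in RHS](sF (perm r1_inj)) msym_mPo; congr (_ \mPo _).
by apply: eq_from_tnth => i; rewrite !tnth_mktuple permE E1.
Qed.

Lemma block_right (R : comRingType) (G : {mpoly R[l]}) : G \is symmetric ->
  G \mPo [tuple 'X_(r (rshift k j)) | j < l] = G \mPo [tuple 'X_(rshift k j) | j < l].
Proof.
move=> /issymP sG; rewrite -[G in RHS](sG (perm r2_inj)) msym_mPo; congr (_ \mPo _).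
by apply: eq_from_tnth => i; rewrite !tnth_mktuple permE E2.
Qed.

Lemma block_num (K : fieldType) (F : {mpoly K[k]}) (G : {mpoly K[l]}) :
  F \is symmetric -> G \is symmetric -> msym r (shuffle_num F G) = shuffle_num F G.
Proof.
move=> sF sG; rewrite /shuffle_num !rmorphM rmorph_prod /=.
congr (_ * _ * _).
- rewrite msym_permE /lift_left comp_mpolyA -(block_left sF); congr (_ \mPo _).
  by apply: eq_from_tnth => i; rewrite !tnth_mktuple comp_mpolyXU -tnth_nth tnth_mktuple.
- rewrite msym_permE /lift_right comp_mpolyA -(block_right sG); congr (_ \mPo _).
  by apply: eq_from_tnth => i; rewrite !tnth_mktuple comp_mpolyXU -tnth_nth tnth_mktuple.
- rewrite -(block_prod (fun a b => 'X_a - 'X_b + 1)); apply: eq_bigr => i _.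
  by rewrite rmorph_prod; apply: eq_bigr => j _; rewrite rmorphD rmorphB rmorph1 /= !msymXU.
Qed.

Lemma block_den (K : fieldType) : msym r (shuffle_den K k l) = shuffle_den K k l.
Proof.
rewrite /shuffle_den rmorph_prod /=.
rewrite -(block_prod (fun a b => 'X_a - 'X_b)); apply: eq_bigr => i _.
by rewrite rmorph_prod; apply: eq_bigr => j _; rewrite rmorphB /= !msymXU.
Qed.

End Block.


Lemma XsubX_neq0 (K : fieldType) n (a b : 'I_n) : a != b -> ('X_a - 'X_b : {mpoly K[n]}) != 0.
Proof.
move=> ab; apply/eqP => h; have := congr1 (mcoeff U_(a)) h.
rewrite mcoeffB !mcoeffXU eqxx eq_sym (negbTE ab) mcoeff0 subr0 => /eqP.
by rewrite oner_eq0.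
Qed.

Lemma star_sym (K : fieldType) k l (F : {mpoly K[k]}) (G : {mpoly K[l]}) (H : {mpoly K[k + l]}) :
  F \is symmetric -> G \is symmetric -> is_star F G H -> H \is symmetric.
Proof.
move=> sF sG hH; apply/issymP => t.
set N := shuffle_num F G; set D := shuffle_den K k l.
have Dnz (s : 'S_(k + l)) : msym s D != 0.
  rewrite /D /shuffle_den rmorph_prod prodf_seq_neq0; apply/allP => i _ /=.
  rewrite rmorph_prod prodf_seq_neq0; apply/allP => j _ /=.
  by rewrite rmorphB /= !msymXU XsubX_neq0 // (inj_eq perm_inj) eq_lrshift.
rewrite /is_star /shuffle_frac in hH.
have E := frac_push (f := msym t) (P := fun s => is_shuffle s)
  (nn := fun s => perm_act s N) (dd := fun s => perm_act s D) _ hH.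
apply/eqP; rewrite -tofrac_eq E ?hH; last first.
  by move=> s _; rewrite /perm_act -msym_permE /= -msymMm.
apply/eqP.
pose g (s : 'S_(k + l)) := tofrac (msym s N) / tofrac (msym s D).
transitivity (\sum_(s | is_shuffle s) g (s * t)%g).
  by apply: eq_bigr => s _; rewrite /perm_act -!msym_permE /= -!msymMm.
transitivity (\sum_(s | is_shuffle s) g s); last first.
  by apply: eq_bigr => s _; rewrite /perm_act -!msym_permE.
transitivity (\sum_(s | is_shuffle s) g (Phi t s)).
  apply: eq_bigr => s _.
  rewrite /g /N /D -[(s * t)%g](mulgKV (Phi t s)) !(msymMm _ (s * t * (Phi t s)^-1)%g (Phi t s)).
  by rewrite (block_num (Phi_bp t s)) // (block_den (Phi_bp t s)).
rewrite [RHS](reindex_onto (Phi t) (Phi t^-1)) => [|s sh]; last first.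
  by rewrite -{1}[t]invgK Phi_inv.
apply: eq_bigl => s; rewrite Phi_shuffle /=.
case: (boolP (is_shuffle s)) => sh; first by rewrite Phi_inv ?eqxx.
apply/esym/negbTE; apply: contra sh => /eqP <-; exact: Phi_shuffle.
Qed.


Definition tupg (K : fieldType) n p (x0 : K) (g : 'I_n -> option 'I_p) : n.-tuple {mpoly K[n]} :=
  [tuple (if g i is Some j then (x0 - j%:R)%:MP else 'X_i) | i < n].

Definition V (K : fieldType) p k (f : {mpoly K[k]}) : Prop :=
  forall (x0 : K) (g : 'I_k -> option 'I_p), (forall j, exists i, g i = Some j) ->
    (forall a b j, g a = Some j -> g b = Some j -> a = b) -> f \mPo tupg x0 g = 0.

Lemma natr_eq_p (K : fieldType) p (hp : p \in [pchar K]) a b :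
  (a < p)%N -> (b < p)%N -> (a%:R == b%:R :> K) = (a == b).
Proof.
have main x y : (x <= y)%N -> (y < p)%N -> (x%:R == y%:R :> K) = (x == y).
  move=> xy yp; rewrite eq_sym -subr_eq0 -natrB // -(dvdn_pcharf hp).
  case: (eqVneq x y) => [->|nxy]; first by rewrite subnn dvdn0.
  apply/negP => /dvdn_leq; have h : (0 < y - x)%N by lia.
  by move/(_ h); lia.
move=> ap bp; case: (leqP a b) => ab; first exact: main.
by rewrite eq_sym main 1?eq_sym //; apply: ltnW.
Qed.

Lemma cyc (p : nat) (P : nat -> bool) : (0 < p)%N ->
  (exists2 j1, (j1 < p)%N & P j1) -> (exists2 j2, (j2 < p)%N & ~~ P j2) ->
  (exists m, [&& (0 < m)%N, (m < p)%N, P m & ~~ P m.-1]) \/ (P 0%N && ~~ P p.-1).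
Proof.
move=> p0 [j1 j1p P1] [j2 j2p P2].
case: (boolP (P 0%N && ~~ P p.-1)) => [h|h]; [by right|left].
case: (boolP [exists m : 'I_p, [&& (0 < m)%N, P m & ~~ P m.-1]]) =>
  [/existsP [m /and3P [a b c]]|nex]; first by exists m; rewrite a ltn_ord b c.
exfalso.
have step m : (0 < m)%N -> (m < p)%N -> P m -> P m.-1.
  move=> m0 mp Pm; apply/negPn/negP => nP; move/negP: nex; apply; apply/existsP.
  by exists (Ordinal mp); rewrite /= m0 Pm nP.
have down (q : nat) : (q < p)%N -> P q -> forall d, (d <= q)%N -> P (q - d)%N.
  move=> qp Pq; elim => [|d IH] hd; first by rewrite subn0.
  rewrite subnS; apply: step; [lia|lia|apply: IH; lia].
have P0 : P 0%N by have := down j1 j1p P1 j1 (leqnn _); rewrite subnn.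
have Pl : P p.-1 by move: h; rewrite P0 /= negbK.
have pl : (p.-1 < p)%N by rewrite ltn_predL.
have := down p.-1 pl Pl (p.-1 - j2)%N (leq_subr _ _).
by rewrite subKn; [apply/negP | lia].
Qed.

Section StarV.
Variables (K : fieldType) (p : nat) (hp : p \in [pchar K]).
Variables (k l : nat) (F : {mpoly K[k]}) (G : {mpoly K[l]}) (H : {mpoly K[k + l]}).
Hypotheses (VF : V p F) (VG : V p G) (hH : is_star F G H).
Variables (x0 : K) (g : 'I_(k + l) -> option 'I_p).
Hypotheses (gsurj : forall j, exists i, g i = Some j)
  (ginj : forall a b j, g a = Some j -> g b = Some j -> a = b).

Let c := tupg x0 g.

Let tc a : tnth c a = if g a is Some j then (x0 - j%:R)%:MP else 'X_a.
Proof. by rewrite tnth_mktuple. Qed.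

Let cdiff a b : a != b -> tnth c a - tnth c b != 0.
Proof.
move=> ab; rewrite !tc.
case Ea: (g a) => [ja|]; case Eb: (g b) => [jb|].
  have nj : ja != jb by apply: contraNneq ab => E; apply/eqP; rewrite -E in Eb; exact: (ginj Ea Eb).
  rewrite -mpolyCB mpolyC_eq0 subr_eq0 (inj_eq (addrI x0)) eqr_opp.
  by rewrite (natr_eq_p hp)...
- apply/eqP => h; have := congr1 (mcoeff U_(b)) h.
  rewrite mcoeffB mcoeffC mcoeffXU mnm1_eq0 eqxx mulr0 sub0r mcoeff0 => /eqP.
  by rewrite oppr_eq0 oner_eq0.
- apply/eqP => h; have := congr1 (mcoeff U_(a)) h.
  rewrite mcoeffB mcoeffC mcoeffXU mnm1_eq0 eqxx mulr0 subr0 mcoeff0 => /eqP.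
  by rewrite oner_eq0.
- exact: XsubX_neq0.
Qed.

Let den_nz (s : 'S_(k + l)) : perm_act s (shuffle_den K k l) \mPo c != 0.
Proof.
rewrite /perm_act -msym_permE msym_mPo /shuffle_den rmorph_prod prodf_seq_neq0.
apply/allP => i _ /=; rewrite rmorph_prod prodf_seq_neq0; apply/allP => j _ /=.
rewrite rmorphB /= !comp_mpolyXU -!tnth_nth !tnth_mktuple -!tc cdiff //.
by rewrite (inj_eq perm_inj) eq_lrshift.
Qed.

Let num_eq (s : 'S_(k + l)) : perm_act s (shuffle_num F G) \mPo c =
  (F \mPo [tuple tnth c (s (lshift l i)) | i < k]) *
  (G \mPo [tuple tnth c (s (rshift k j)) | j < l]) *
  \prod_(i < k) \prod_(j < l)
     (tnth c (s (lshift l i)) - tnth c (s (rshift k j)) + 1).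
Proof.
rewrite /perm_act -msym_permE msym_mPo /shuffle_num !rmorphM rmorph_prod /=.
congr (_ * _ * _).
- rewrite /lift_left comp_mpolyA; congr (_ \mPo _).
  by apply: eq_from_tnth => i; rewrite !tnth_mktuple comp_mpolyXU -tnth_nth tnth_mktuple.
- rewrite /lift_right comp_mpolyA; congr (_ \mPo _).
  by apply: eq_from_tnth => i; rewrite !tnth_mktuple comp_mpolyXU -tnth_nth tnth_mktuple.
- apply: eq_bigr => i _; rewrite rmorph_prod; apply: eq_bigr => j _.
  by rewrite rmorphD rmorphB rmorph1 /= !comp_mpolyXU -!tnth_nth !tnth_mktuple.
Qed.

Let sub_eq m (f : 'I_m -> 'I_(k + l)) (finj : injective f) :
  [tuple tnth c (f i) | i < m] =
  [tuple tnth (tupg x0 (fun i => g (f i))) i \mPo [tuple 'X_(f i) | i < m] | i < m].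
Proof.
apply: eq_from_tnth => i; rewrite !tnth_mktuple.
case: (g (f i)) => [jj|]; first by rewrite comp_mpolyC.
by rewrite comp_mpolyXU -tnth_nth tnth_mktuple.
Qed.

Let num_zero (s : 'S_(k + l)) : perm_act s (shuffle_num F G) \mPo c = 0.
Proof.
rewrite num_eq.
pose inA (jj : 'I_p) := [exists i : 'I_k, g (s (lshift l i)) == Some jj].
have ls_inj : injective (fun i => s (lshift l i)).
  by move=> a b /perm_inj /lshift_inj.
have rs_inj : injective (fun i => s (rshift k i)).
  by move=> a b /perm_inj /rshift_inj.
have posB jj : ~~ inA jj -> exists j, g (s (rshift k j)) = Some jj.
  move=> nA; have [a ga] := gsurj jj.
  have := ga; rewrite -(permKV s a); case: (splitP (s^-1 a)%g) => [i|j] Ei.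
  - have -> : (s^-1 a)%g = lshift l i by apply: val_inj.
    by move=> gi; case/negP: nA; apply/existsP; exists i; rewrite gi.
  - have -> : (s^-1 a)%g = rshift k j by apply: val_inj.
    by move=> gj; exists j.
case: (boolP [forall jj, inA jj]) => [/forallP allA | ].
  rewrite (sub_eq ls_inj) -comp_mpolyA VF ?comp_mpoly0 ?mul0r //.
  - by move=> jj; have /existsP [i /eqP gi] := allA jj; exists i.
  - by move=> a b jj ga gb; apply: ls_inj; apply: (ginj ga gb).
rewrite negb_forall => /existsP [j2 nA2].
case: (boolP [forall jj, ~~ inA jj]) => [/forallP noA | ].
  rewrite (sub_eq rs_inj) -comp_mpolyA VG ?comp_mpoly0 ?mulr0 ?mul0r //.
  - by move=> jj; apply: posB.
  - by move=> a b jj ga gb; apply: rs_inj; apply: (ginj ga gb).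
rewrite negb_forall => /existsP [j1]; rewrite negbK => A1.
have p0 : (0 < p)%N by apply: leq_ltn_trans (ltn_ord j1).
pose P (m : nat) := [exists jj : 'I_p, (val jj == m) && inA jj].
have PA (jj : 'I_p) : P jj = inA jj.
  apply/existsP/idP => [[u /andP [/eqP /val_inj -> //]]|h]; by exists jj; rewrite eqxx.
have zero_of (a b : 'I_p) : inA a -> ~~ inA b ->
    (b%:R - a%:R + 1 : K) = 0 -> \prod_(i < k) \prod_(j < l)
     (tnth c (s (lshift l i)) - tnth c (s (rshift k j)) + 1) = 0.
  move=> /existsP [i /eqP gi] nb e; have [j gj] := posB b nb.
  rewrite (bigD1 i) //= (bigD1 j) //= !tc gi gj.
  rewrite -mpolyCB -mpolyC1 -mpolyCD.
  have -> : x0 - a%:R - (x0 - b%:R) + 1 = b%:R - a%:R + 1 by ring.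
  by rewrite e mpolyC0 !mul0r.
have := @cyc p P p0 (ex_intro2 _ _ (val j1) (ltn_ord j1) (etrans (PA j1) A1))
                 (ex_intro2 _ _ (val j2) (ltn_ord j2) (etrans (congr1 negb (PA j2)) nA2)).
case=> [[m /and4P [m0 mp Pm nPm]]|/andP [P0 nPl]].
- move/existsP: Pm => [a /andP [/eqP am Aa]].
  have mp' : (m.-1 < p)%N by lia.
  have nb : ~~ inA (Ordinal mp') by rewrite -PA.
  rewrite (zero_of a (Ordinal mp')) ?mulr0 //= am.
  rewrite -[in X in _ - X](prednK m0) -natr1; ring.
- move/existsP: P0 => [a /andP [/eqP a0 Aa]].
  have pl : (p.-1 < p)%N by rewrite ltn_predL.
  have nb : ~~ inA (Ordinal pl) by rewrite -PA.
  rewrite (zero_of a (Ordinal pl)) ?mulr0 //= a0 subr0 natr1 prednK //.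
  exact: pcharf0 hp.
Qed.

Lemma star_V : H \mPo c = 0.
Proof.
have := hH; rewrite /is_star /shuffle_frac => hH'.
have E := frac_push (f := comp_mpoly c) (P := fun s => is_shuffle s)
  (nn := fun s => perm_act s (shuffle_num F G))
  (dd := fun s => perm_act s (shuffle_den K k l)) _ hH'.
apply/eqP; rewrite -tofrac_eq0 E; last by move=> s _; apply: den_nz.
by rewrite big1 // => s _ /=; rewrite num_zero rmorph0 mul0r.
Qed.

End StarV.


Lemma V_J (K : fieldType) p k (f : {mpoly K[k]}) : f \is symmetric -> V p f -> J p f.
Proof.
move=> sf vf; split => // pk a x0 ha.
pose g (i : 'I_k) : option 'I_p := insub (val i).
have gs (jj : 'I_p) : exists i, g i = Some jj.
  by exists (widen_ord pk jj); rewrite /g /= valK.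
have gi a1 b1 j : g a1 = Some j -> g b1 = Some j -> a1 = b1.
  rewrite /g; case: insubP => // u _ ua [<-]; case: insubP => // v _ vb [] vu.
  by apply: val_inj; rewrite -ua -vb vu.
have := vf x0 g gs gi; move/(congr1 (meval a)); rewrite comp_mpoly_meval meval0 => <-.
apply: meval_eq => i; rewrite tnth_mktuple /g.
case: insubP => [u ui vu|_]; last by rewrite mevalXU.
by rewrite mevalC ha // vu.
Qed.

Lemma inv_all (K : fieldType) p (hp : p \in [pchar K]) (hp2 : (1 < p)%N) k (f : {mpoly K[k]}) :
  ImPsi K k f -> f \is symmetric /\ V p f.
Proof.
have p0 : (0 < p)%N by lia.
elim => {k f} [|r|k|k f g _ [sf vf] _ [sg vg]|k c' f _ [sf vf]|k l F G H _ [sF vF] _ [sG vG] hH].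
- split; first exact: rpred1.
  by move=> x0 g gs _; have [i _] := gs (Ordinal p0); case: i.
- split.
    by apply/issymP => s; rewrite rmorphXn /= msymXU [s _]ord1.
  move=> x0 g gs gi; have [i0 e0] := gs (Ordinal p0); have [i1 e1] := gs (Ordinal hp2).
  rewrite [i0]ord1 in e0; rewrite [i1]ord1 e0 in e1.
  by move: (congr1 (omap val) e1).
- by split; [exact: rpred0 | move=> *; rewrite comp_mpoly0].
- split; first exact: rpredD.
  by move=> x0 h hs hi; rewrite comp_mpolyD vf // vg // addr0.
- split; first exact: rpredZ.
  by move=> x0 h hs hi; rewrite comp_mpolyZ vf // scaler0.
- split; first exact: (star_sym sF sG hH).
  move=> x0 h hs hi; exact: (star_V hp vF vG hH x0 hs hi).
Qed.

Unset Implicit Arguments. Set Strict Implicit.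

Theorem proposition3p1 (K : closedFieldType) (p : nat)
  (hp : p \in [pchar K]) (hp2 : (2 < p)%N)
  (k : nat) (f : {mpoly K[k]}) :
  ImPsi K k f -> J p f.
Proof.
move=> h; have [sf vf] := inv_all hp (ltnW hp2) h.
exact: V_J.
Qed.
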